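(* Let $m\ge2$. For $j\ge0$ write $J_0=[j]_{t^m}$, $J_1=[j+1]_{t^m}$, $J_2=[j+2]_{t^m}$, and write $\beta=\beta(m;t,q)$. Define, for all $j\ge0$ (with the special values at index $0$ taking precedence over the general formulas): $A_0=-q^{m-2}$; $A_{2j}=(-t)^mq^{m-2}J_0/J_1$ ($j\ge1$); $A_{2j+1}=\frac{(-1)^mJ_2}{J_1}\beta+\left(\frac{1-2J_2}{J_1}-\frac{t^{m(j+1)}J_2}{J_1^2}\right)q^m$; $B_{2j}=\beta+2\left(\frac1{J_1}-1\right)(-q)^m$; $B_{2j+1}=\beta-2\left(\frac{t^{m(j+1)}}{J_1}+1\right)(-q)^m$; $C_0=-t^mq^{m+2}$; $C_{2j}=-\beta q^2-\left(\frac1{J_1}-\frac{t^{mj}}{J_0}-2\right)(-q)^{m+2}$ ($j\ge1$); $C_{2j+1}=-q^m$; $k_{2j}=m-2$, $k_{2j+1}=0$; $a_0=-1$, $a_{2j}=(-t)^mJ_0/J_1$ ($j\ge1$), $a_{2j+1}=(-1)^mJ_2/J_1$; $D_{2j}=\beta-(-q)^m(1+t^m)$, $D_{2j+1}=1$. Then for every $n\ge0$, $\mathtt{NextABC}(A_n,B_n,C_n)=(A_{n+1},B_{n+1},C_{n+1};k_n,a_n,D_n)$.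
   Context: For $0\le d\le m-1$ let $\rho(m;t,d)=\frac{m}{m-d}\sum_{i=0}^{d}\binom{m-1-d+i}{i}\binom{m-1-i}{d-i}t^i$ and $\rho(m;t,m)=1+t^m$; set $\beta(m;t,q)=\sum_{d=0}^{m}\rho(m;t,d)(-q)^d$. $[n]_x=1+x+\cdots+x^{n-1}$. All objects are polynomials in $q$ with coefficients in $\mathbb{Q}(t)$. The map $\mathtt{NextABC}$ takes polynomials $A,B,C$ in $q$ with $A\ne0$, $C\ne0$, $B(0)=1$, $C(0)=0$ and returns $(A^*,B^*,C^*;k,a,D)$ defined as follows: $k\ge0$ and $a\ne0$ are such that $A=aq^k+O(q^{k+1})$; $D$ is the unique polynomial in $q$ of degree at most $k+1$ with $\frac{aq^kB}{A}-\frac{aq^kC}{B}=D+O(q^{k+2})$ (as power series in $q$); and $A^*=\bigl(-D^2A/a+BDq^k-Caq^{2k}\bigr)/q^{2k+2}$, $B^*=2AD/(aq^k)-B$, $C^*=-Aq^2/a$. *)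

(* Defs.v *)
From HB Require Import structures.
From mathcomp Require Import all_boot all_order all_algebra.
Set Implicit Arguments. Unset Strict Implicit. Unset Printing Implicit Defensive.
Import Order.TTheory GRing.Theory Num.Theory.
Local Open Scope ring_scope.

Definition Qt : fieldType := {fraction {poly rat}}.
Definition tt : Qt := tofrac ('X : {poly rat}).

Definition qint (n : nat) (x : Qt) : Qt := \sum_(i < n) x ^+ i.

Definition rho (m d : nat) : Qt :=
  if d == m then 1 + tt ^+ m
  else (m%:R / (m - d)%:R) *
       \sum_(i < d.+1) ('C(m - 1 - d + i, i) * 'C(m - 1 - i, d - i))%:R * tt ^+ i.

(* beta(m;t,q) as a polynomial in q *)
Definition beta (m : nat) : {poly Qt} :=
  \sum_(d < m.+1) (rho m d)%:P * (- 'X) ^+ d.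

(* "f/g = h + O(q^n)" as Laurent series in q (f, g, h polynomials, g <> 0):
   writing g = q^v g' with g'(0) <> 0, this means q^(n+v) divides f - h g. *)
Definition ser_approx (F : fieldType) (f g h : {poly F}) (n : nat) : Prop :=
  g != 0 /\ exists v : nat,
    (forall i, (i < v)%N -> g`_i = 0) /\ g`_v != 0 /\ 'X ^+ (n + v) %| f - h * g.

Definition NextABC (F : fieldType) (A B C As Bs Cs : {poly F}) (k : nat) (a : F)
  (D : {poly F}) : Prop :=
  [/\ A != 0, C != 0, B`_0 = 1 & C`_0 = 0] /\
  [/\ a != 0, (forall i, (i < k)%N -> A`_i = 0) & A`_k = a] /\
  (* D of degree <= k+1 with a q^k B/A - a q^k C/B = D + O(q^(k+2)) *)
  (size D <= k.+2)%N /\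
  ser_approx (a%:P * 'X ^+ k * B * B - a%:P * 'X ^+ k * C * A) (A * B) D k.+2 /\
  As * 'X ^+ (2 * k + 2) =
    - (a^-1)%:P * D ^+ 2 * A + B * D * 'X ^+ k - C * a%:P * 'X ^+ (2 * k) /\
  (Bs + B) * (a%:P * 'X ^+ k) = 2%:R * A * D /\
  Cs = - (A * 'X ^+ 2) * (a^-1)%:P.

Section Seqs.
Variable m : nat.
Let tm : Qt := tt ^+ m.
Let J0 (j : nat) : Qt := qint j tm.
Let J1 (j : nat) : Qt := qint j.+1 tm.
Let J2 (j : nat) : Qt := qint j.+2 tm.
Let mq (e : nat) : {poly Qt} := (- 'X) ^+ e.

Definition seqA (n : nat) : {poly Qt} :=
  let j := n./2 in
  if odd n then
    ((-1) ^+ m * J2 j / J1 j)%:P * beta m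
    + ((1 - 2%:R * J2 j) / J1 j - tt ^+ (m * j.+1) * J2 j / (J1 j ^+ 2))%:P * 'X ^+ m
  else if j == 0%N then - 'X ^+ (m - 2)
  else ((- tt) ^+ m * J0 j / J1 j)%:P * 'X ^+ (m - 2).

Definition seqB (n : nat) : {poly Qt} :=
  let j := n./2 in
  if odd n then beta m - (2%:R * (tt ^+ (m * j.+1) / J1 j + 1))%:P * mq m
  else beta m + (2%:R * ((J1 j)^-1 - 1))%:P * mq m.

Definition seqC (n : nat) : {poly Qt} :=
  let j := n./2 in
  if odd n then - 'X ^+ m
  else if j == 0%N then - tm%:P * 'X ^+ (m + 2)
  else - beta m * 'X ^+ 2
       - ((J1 j)^-1 - tt ^+ (m * j) / J0 j - 2%:R)%:P * mq (m + 2).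

Definition seqk (n : nat) : nat := if odd n then 0%N else (m - 2)%N.

Definition seqa (n : nat) : Qt :=
  let j := n./2 in
  if odd n then (-1) ^+ m * J2 j / J1 j
  else if j == 0%N then -1
  else (- tt) ^+ m * J0 j / J1 j.

Definition seqD (n : nat) : {poly Qt} :=
  if odd n then 1 else beta m - mq m * (1 + tm)%:P.
End Seqs.

(* Main.v *)
Require Import Defs.
From HB Require Import structures.
From mathcomp Require Import all_boot all_order all_algebra.
From mathcomp Require Import ring.
Import Order.TTheory GRing.Theory Num.Theory.
Local Open Scope ring_scope.

Lemma qint0 (x : Qt) : qint 0 x = 0.
Proof. by rewrite /qint big_ord0. Qed.

Lemma qint_rec (n : nat) (x : Qt) : qint n.+1 x = 1 + x * qint n x.
Proof.
rewrite /qint big_ord_recl expr0 mulr_sumr; congr (_ + _).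
by apply: eq_bigr => i _; rewrite /= exprS.
Qed.

Lemma qint_recr (n : nat) (x : Qt) : qint n.+1 x = qint n x + x ^+ n.
Proof. by rewrite /qint big_ord_recr. Qed.

Lemma xpow_qint (n : nat) (x : Qt) : x ^+ n = 1 + x * qint n x - qint n x.
Proof. by rewrite -qint_rec qint_recr addrC addKr. Qed.

Lemma qint_neq0 (m n : nat) : (0 < n)%N -> qint n (tt ^+ m) != 0.
Proof.
move=> hn.
have -> : qint n (tt ^+ m) = tofrac (\sum_(i < n) ('X^m : {poly rat}) ^+ i).
  by rewrite rmorph_sum /qint; apply: eq_bigr => i _; rewrite !rmorphXn.
rewrite tofrac_eq0; apply/eqP => /(congr1 (fun p => p.[1])).
rewrite horner_sum horner0.
under eq_bigr => i _ do rewrite horner_exp hornerXn expr1n expr1n.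
rewrite sumr_const card_ord => /eqP; rewrite pnatr_eq0; case: n hn => //.
Qed.

Lemma tt_neq0 : tt != 0.
Proof. by rewrite /tt tofrac_eq0 polyX_eq0. Qed.

Lemma natQt_neq0 (m : nat) : (0 < m)%N -> (m%:R : Qt) != 0.
Proof.
move=> hm; have -> : (m%:R : Qt) = tofrac (m%:R : {poly rat}) by rewrite rmorph_nat.
by rewrite tofrac_eq0 -polyC_natr polyC_eq0 pnatr_eq0 -lt0n.
Qed.

Lemma mqE (F : fieldType) (e : nat) : (- 'X : {poly F}) ^+ e = ((-1) ^+ e)%:P * 'X^e.
Proof. by rewrite [LHS]exprNn polyC_exp polyCN polyC1. Qed.


Lemma beta_coef (m j : nat) :
  (beta m)`_j = if (j <= m)%N then rho m j * (-1) ^+ j else 0.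
Proof.
rewrite /beta coef_sum.
under eq_bigr => d _ do rewrite mqE coefCM coefCM coefXn.
case: ifP => hj.
  rewrite (bigD1 (Ordinal (hj : (j < m.+1)%N))) //= eqxx mulr1 big1 ?addr0 //.
  move=> i /eqP hi; suff -> : (j == i) = false by rewrite !mulr0.
  by apply/negbTE; apply/eqP => hji; apply: hi; apply: val_inj => /=.
rewrite big1 // => i _; suff -> : (j == i) = false by rewrite !mulr0.
apply/negbTE; apply/eqP => hji; move: (ltn_ord i); rewrite -hji ltnS hj //.
Qed.

Lemma beta0 (m : nat) : (0 < m)%N -> (beta m)`_0 = 1.
Proof.
move=> hm; rewrite beta_coef leq0n expr0 mulr1 /rho.
have -> : (0 == m) = false by case: m hm.
rewrite big_ord1 subn0 /= !bin0 expr0 mulr1 mulr1 mulfV //.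
exact: natQt_neq0.
Qed.

Lemma beta_size (m : nat) :
  (size (beta m + (- ((-1) ^+ m * (1 + tt ^+ m)))%:P * 'X^m)%R <= m)%N.
Proof.
apply/leq_sizeP => j hj; rewrite coefD coefCM coefXn beta_coef.
case: (ltngtP j m) => [h|h|->].
- by move: (leq_trans h hj); rewrite ltnn.
- by rewrite add0r mulr0.
- by rewrite /rho eqxx mulr1 mulrC subrr.
Qed.

Section Gen.
Variable F : fieldType.

Lemma polyCVK (a : F) : a != 0 -> (a^-1)%:P * a%:P = 1.
Proof. by move=> ha; rewrite -polyCM mulVf. Qed.

Lemma poly_neq0_coef (P : {poly F}) i : P`_i != 0 -> P != 0.
Proof. by apply: contraNneq => ->; rewrite coef0. Qed.

Lemma step_even (p : nat) (b C2 A' B' : {poly F}) (a u d : F) :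
  b`_0 = 1 -> leq (size (b + d%:P * 'X^(p.+2))) p.+2 -> a != 0 -> 'X^2 * C2 != 0 ->
  A' = (b + d%:P * 'X^(p.+2)) * (u - d)%:P - a%:P * C2 ->
  B' = b + (2%:R * d - u)%:P * 'X^(p.+2) ->
  NextABC (a%:P * 'X^p) (b + u%:P * 'X^(p.+2)) ('X^2 * C2) A' B' (- 'X^(p.+2)) p a
          (b + d%:P * 'X^(p.+2)).
Proof.
move=> hb0 hsz ha hC hA' hB'.
have hB0 : (b + u%:P * 'X^(p.+2))`_0 = 1 by rewrite coefD coefCM coefXn /= mulr0 addr0.
have hBnz : b + u%:P * 'X^(p.+2) != 0 by apply: (@poly_neq0_coef _ 0); rewrite hB0 oner_eq0.
have hAnz : a%:P * 'X^p != 0 by apply: (@poly_neq0_coef _ p); rewrite coefCM coefXn eqxx mulr1.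
split; first split => //; first by rewrite coefXnM.
split; first split => //.
  by move=> i hi; rewrite coefCM coefXn (ltn_eqF hi) mulr0.
  by rewrite coefCM coefXn eqxx mulr1.
split => //.
split.
  split; first by rewrite mulf_neq0.
  exists p; split.
    move=> i hi; rewrite -mulrA mulrCA coefXnM hi //.
  split; first by rewrite -mulrA mulrCA coefXnM ltnn subnn coefCM hB0 mulr1.
  apply/dvdpP; exists (a%:P * ((u - d)%:P * (b + u%:P * 'X^(p.+2)) - a%:P * C2)).
  rewrite !exprD !exprS; ring.
split.
  rewrite hA'.
  have -> : - (a^-1)%:P * (b + d%:P * 'X^(p.+2)) ^+ 2 * (a%:P * 'X^p)
           = - ((b + d%:P * 'X^(p.+2)) ^+ 2 * 'X^p) * ((a^-1)%:P * a%:P) by ring.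
  rewrite polyCVK // mulr1 mul2n -addnn !exprD !exprS; ring.
split; first by rewrite hB'; ring.
transitivity (- ('X^(p.+2)) * (a%:P * (a^-1)%:P)); first by rewrite [a%:P * _]mulrC polyCVK // mulr1.
rewrite !exprS; ring.
Qed.

Lemma step_odd (p : nat) (b A'' B'' C'' : {poly F}) (a c1 u : F) :
  b`_0 = 1 -> a != 0 ->
  A'' * 'X^2 = (u - c1 + a)%:P * 'X^(p.+2) ->
  B'' = b + (2%:R * c1 - u)%:P * 'X^(p.+2) ->
  C'' = - ((b + c1%:P * 'X^(p.+2)) * 'X^2) ->
  NextABC (a%:P * (b + c1%:P * 'X^(p.+2))) (b + u%:P * 'X^(p.+2)) (- 'X^(p.+2))
          A'' B'' C'' 0 a 1.
Proof.
move=> hb0 ha hA hB hC.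
have hB0 : (b + u%:P * 'X^(p.+2))`_0 = 1 by rewrite coefD coefCM coefXn /= mulr0 addr0.
have hA0 : (a%:P * (b + c1%:P * 'X^(p.+2)))`_0 = a.
  by rewrite coefCM coefD coefCM coefXn /= mulr0 addr0 hb0 mulr1.
have hBnz : b + u%:P * 'X^(p.+2) != 0 by apply: (@poly_neq0_coef _ 0); rewrite hB0 oner_eq0.
have hAnz : a%:P * (b + c1%:P * 'X^(p.+2)) != 0 by apply: (@poly_neq0_coef _ 0); rewrite hA0.
split; first split => //.
- by apply: (@poly_neq0_coef _ p.+2); rewrite coefN coefXn eqxx oppr_eq0 oner_eq0.
- by rewrite coefN coefXn /= oppr0.
split; first by split.
split; first by rewrite size_poly1.
split.
  split; first by rewrite mulf_neq0.
  exists 0%N; split => //; split; first by rewrite coef0M hA0 hB0 mulr1.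
  apply/dvdpP; exists ('X^p * (a%:P * ((u - c1)%:P * (b + u%:P * 'X^(p.+2))
                                       + a%:P * (b + c1%:P * 'X^(p.+2))))).
  rewrite !exprS; ring.
split.
  rewrite muln0 add0n hA.
  have -> : - (a^-1)%:P * 1 ^+ 2 * (a%:P * (b + c1%:P * 'X^(p.+2)))
           = - (b + c1%:P * 'X^(p.+2)) * ((a^-1)%:P * a%:P) by ring.
  rewrite polyCVK // mulr1 !exprS; ring.
split; first by rewrite hB; ring.
rewrite hC.
transitivity (- ((b + c1%:P * 'X^(p.+2)) * 'X^2) * (a%:P * (a^-1)%:P)); first by rewrite [a%:P * _]mulrC polyCVK // mulr1.
ring.
Qed.


Lemma step_odd' (p : nat) (b A B C A'' B'' C'' D : {poly F}) (k : nat) (a c1 u : F) :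
  b`_0 = 1 -> a != 0 ->
  A = a%:P * (b + c1%:P * 'X^(p.+2)) ->
  B = b + u%:P * 'X^(p.+2) ->
  C = - 'X^(p.+2) -> k = 0%N -> D = 1 ->
  A'' * 'X^2 = (u - c1 + a)%:P * 'X^(p.+2) ->
  B'' = b + (2%:R * c1 - u)%:P * 'X^(p.+2) ->
  C'' = - ((b + c1%:P * 'X^(p.+2)) * 'X^2) ->
  NextABC A B C A'' B'' C'' k a D.
Proof. move=> ? ? -> -> -> -> -> ? ? ?; exact: step_odd. Qed.

Lemma step_even' (p : nat) (b A B C C2 A' B' C' D : {poly F}) (k : nat) (a u d : F) :
  b`_0 = 1 -> leq (size (b + d%:P * 'X^(p.+2))) p.+2 -> a != 0 -> 'X^2 * C2 != 0 ->
  A = a%:P * 'X^p -> B = b + u%:P * 'X^(p.+2) -> C = 'X^2 * C2 ->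
  k = p -> D = b + d%:P * 'X^(p.+2) ->
  A' = (b + d%:P * 'X^(p.+2)) * (u - d)%:P - a%:P * C2 ->
  B' = b + (2%:R * d - u)%:P * 'X^(p.+2) ->
  C' = - 'X^(p.+2) ->
  NextABC A B C A' B' C' k a D.
Proof. move=> ? ? ? ? -> -> -> -> -> ? ? ->; exact: step_even. Qed.
End Gen.

Section Shapes.
Variable F : fieldType.
Implicit Types (b X : {poly F}) (a c d v w s : F).
Lemma shape1 b X a c d : c = a * d -> a%:P * b + c%:P * X = a%:P * (b + d%:P * X).
Proof. by move=> ->; rewrite polyCM; ring. Qed.
Lemma shape2 (p : nat) v w : v = w -> v%:P * 'X^p * ('X^2 : {poly F}) = w%:P * 'X^(p.+2).
Proof. by move=> ->; rewrite !exprS; ring. Qed.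
Lemma shape3 b X v s w : v * s = w -> b + v%:P * (s%:P * X) = b + w%:P * X.
Proof. by move=> <-; rewrite polyCM; ring. Qed.
End Shapes.
Lemma shape4 (F : fieldType) (b : {poly F}) (c s : F) (p : nat) :
  - b * 'X^2 - c%:P * (s%:P * 'X^(p.+4)) = - ((b + (c * s)%:P * 'X^(p.+2)) * 'X^2).
Proof. rewrite polyCM !exprS; ring. Qed.
Section Shapes2.
Variable F : fieldType.
Implicit Types (b X : {poly F}) (a c d e u v w s x : F).
Lemma shape5 b c s (p : nat) :
  - b * 'X^2 - c%:P * (s%:P * 'X^(p.+4)) = 'X^2 * (- b + (- (c * s))%:P * 'X^(p.+2)).
Proof. rewrite polyCN polyCM !exprS; ring. Qed.
Lemma shape6 x (p : nat) :
  - x%:P * 'X^(p.+4) = 'X^2 * ((- x)%:P * ('X^(p.+2) : {poly F})).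
Proof. rewrite polyCN !exprS; ring. Qed.
Lemma shape7 b s x X : b - (s%:P * X) * (1 + x)%:P = b + (- (s * (1 + x)))%:P * X.
Proof. rewrite polyCN polyCM polyCD polyC1; ring. Qed.
Lemma shape8 b X (a' : F) a c e u d : a' = u - d + a -> c = d * (u - d) - a * e ->
  a'%:P * b + c%:P * X = (b + d%:P * X) * (u - d)%:P - a%:P * (- b + e%:P * X).
Proof. move=> -> ->; rewrite !(polyCD, polyCM, polyCN); ring. Qed.
Lemma shape9 b X (a' : F) a c x u d : a' = u - d -> c = d * (u - d) + a * x ->
  a'%:P * b + c%:P * X = (b + d%:P * X) * (u - d)%:P - a%:P * ((- x)%:P * X).
Proof. move=> -> ->; rewrite !(polyCD, polyCM, polyCN); ring. Qed.
Lemma shape10 b X v s w : - (v * s) = w -> b - v%:P * (s%:P * X) = b + w%:P * X.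
Proof. by move=> <-; rewrite polyCN polyCM; ring. Qed.
Lemma C2_neq0 b c (p : nat) : b`_0 = 1 -> 'X^2 * (- b + c%:P * 'X^(p.+2)) != 0.
Proof.
move=> hb; apply: (@poly_neq0_coef _ _ 2); rewrite coefXnM ltnn subnn.
by rewrite coefD coefN coefCM coefXn hb mulr0 addr0 oppr_eq0 oner_neq0.
Qed.
Lemma C2_neq0' x (p : nat) : x != 0 -> 'X^2 * ((- x)%:P * 'X^(p.+2)) != 0 :> {poly F}.
Proof.
move=> hx; apply: mulf_neq0; first by rewrite expf_neq0 // polyX_eq0.
apply: mulf_neq0; first by rewrite polyC_eq0 oppr_eq0.
by rewrite expf_neq0 // polyX_eq0.
Qed.
End Shapes2.

Set Implicit Arguments. Unset Strict Implicit. Unset Printing Implicit Defensive.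

Section GenSeqs.
Variable F : fieldType.
Variable tt : F.
Variable bm : {poly F}.
Definition qintF (n : nat) (x : F) : F := \sum_(i < n) x ^+ i.
Variable m : nat.
Let tm : F := tt ^+ m.
Let J0 (j : nat) : F := qintF j tm.
Let J1 (j : nat) : F := qintF j.+1 tm.
Let J2 (j : nat) : F := qintF j.+2 tm.
Let mq (e : nat) : {poly F} := (- 'X) ^+ e.

Definition seqAF (n : nat) : {poly F} :=
  let j := n./2 in
  if odd n then
    ((-1) ^+ m * J2 j / J1 j)%:P * bm
    + ((1 - 2%:R * J2 j) / J1 j - tt ^+ (m * j.+1) * J2 j / (J1 j ^+ 2))%:P * 'X ^+ m
  else if j == 0%N then - 'X ^+ (m - 2)
  else ((- tt) ^+ m * J0 j / J1 j)%:P * 'X ^+ (m - 2).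

Definition seqBF (n : nat) : {poly F} :=
  let j := n./2 in
  if odd n then bm - (2%:R * (tt ^+ (m * j.+1) / J1 j + 1))%:P * mq m
  else bm + (2%:R * ((J1 j)^-1 - 1))%:P * mq m.

Definition seqCF (n : nat) : {poly F} :=
  let j := n./2 in
  if odd n then - 'X ^+ m
  else if j == 0%N then - tm%:P * 'X ^+ (m + 2)
  else - bm * 'X ^+ 2
       - ((J1 j)^-1 - tt ^+ (m * j) / J0 j - 2%:R)%:P * mq (m + 2).

Definition seqaF (n : nat) : F :=
  let j := n./2 in
  if odd n then (-1) ^+ m * J2 j / J1 j
  else if j == 0%N then -1
  else (- tt) ^+ m * J0 j / J1 j.

Definition seqDF (n : nat) : {poly F} :=
  if odd n then 1 else bm - mq m * (1 + tm)%:P.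
End GenSeqs.

Lemma seqA_eq m n : seqA m n = seqAF tt (beta m) m n. Proof. reflexivity. Qed.
Lemma seqB_eq m n : seqB m n = seqBF tt (beta m) m n. Proof. reflexivity. Qed.
Lemma seqC_eq m n : seqC m n = seqCF tt (beta m) m n. Proof. reflexivity. Qed.
Lemma seqa_eq m n : seqa m n = seqaF tt m n. Proof. reflexivity. Qed.
Lemma seqD_eq m n : seqD m n = seqDF tt (beta m) m n. Proof. reflexivity. Qed.
Lemma qint_eq n x : qint n x = qintF n x. Proof. reflexivity. Qed.

Section QF.
Variable F : fieldType.
Lemma qintF0 (x : F) : qintF 0 x = 0.
Proof. by rewrite /qintF big_ord0. Qed.
Lemma qintF_rec (n : nat) (x : F) : qintF n.+1 x = 1 + x * qintF n x.
Proof.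
rewrite /qintF big_ord_recl expr0 mulr_sumr; congr (_ + _).
by apply: eq_bigr => i _; rewrite /= exprS.
Qed.
Lemma qintF_recr (n : nat) (x : F) : qintF n.+1 x = qintF n x + x ^+ n.
Proof. by rewrite /qintF big_ord_recr. Qed.
Lemma xpowF (n : nat) (x : F) : x ^+ n = 1 + x * qintF n x - qintF n x.
Proof. by rewrite -qintF_rec qintF_recr addrC addKr. Qed.
Lemma sgn2 (e : nat) : (-1 : F) ^+ e.+2 = (-1) ^+ e.
Proof. by rewrite !exprS mulN1r mulN1r opprK. Qed.
Lemma sgn_cases (p : nat) : (-1 : F) ^+ p = 1 \/ (-1 : F) ^+ p = -1.
Proof. rewrite -signr_odd; case: (odd p); [right|left]; by rewrite ?expr1 ?expr0. Qed.
End QF.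

Lemma main_gen (F : fieldType) (t : F) (b : {poly F}) (p : nat)
  (ht : t != 0) (hq : forall n, (0 < n)%N -> qintF n (t ^+ p.+2) != 0)
  (hb0 : b`_0 = 1)
  (hsz : leq (size (b + (- ((-1) ^+ p.+2 * (1 + t ^+ p.+2)))%:P * 'X^(p.+2))) p.+2)
  (n : nat) :
  NextABC (seqAF t b p.+2 n) (seqBF t b p.+2 n) (seqCF t b p.+2 n)
    (seqAF t b p.+2 n.+1) (seqBF t b p.+2 n.+1) (seqCF t b p.+2 n.+1)
    (if odd n then 0%N else p) (seqaF t p.+2 n) (seqDF t b p.+2 n).
Proof.
have hx : t ^+ p.+2 != 0 by rewrite expf_neq0.
rewrite -[n](odd_double_half n); case: (odd n); move: (n./2) => j {n}.
- rewrite /seqAF /seqBF /seqCF /seqaF /seqDF /= ?odd_double ?uphalf_double ?doubleK /=.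
  have hJ1 := hq _ (ltn0Sn j).
  have hJ2 := hq _ (ltn0Sn j.+1).
  rewrite !addn2 !mqE !sgn2 [(- t) ^+ _]exprNn !sgn2 subSS subSS subn0 !exprM.
  move: (t ^+ p.+2) hx hJ1 hJ2 => x hx hJ1 hJ2.
  rewrite (exprS x j) (xpowF j x).
  move: hJ1 hJ2; rewrite (qintF_rec j.+1 x) (qintF_rec j x).
  move: (qintF j x) => J hJ1 hJ2.
  have hs := @sgn_cases F p.
  move: ((-1) ^+ p) hs => s hs.
  apply: (@step_odd' _ p b _ _ _ _ _ _ _ _ _
     (((1 + x * (1 + x * J))^-1 - x * (1 + x * J - J) / (1 + x * J) - 2) * s)
     (-(2 * (x * (1 + x * J - J) / (1 + x * J) + 1)) * s)).
  + exact: hb0.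
  + have hs0 : s != 0 by case: hs => ->; rewrite ?oppr_eq0 oner_neq0.
    by rewrite mulf_neq0 ?invr_eq0 // mulf_neq0.
  + apply: shape1; case: hs => ->; field; by rewrite ?hJ1 ?hJ2.
  + ring.
  + by [].
  + by [].
  + by [].
  + apply: shape2; case: hs => ->; field; by rewrite ?hJ1 ?hJ2.
  + apply: shape3; case: hs => ->; field; by rewrite ?hJ1 ?hJ2.
  + exact: shape4.
- rewrite /seqAF /seqBF /seqCF /seqaF /seqDF /= add0n ?odd_double ?uphalf_double ?doubleK /=.
  rewrite !addn2 !mqE !sgn2 [(- t) ^+ _]exprNn !sgn2 subSS subSS subn0 !exprM.
  rewrite sgn2 in hsz.
  have hs := @sgn_cases F p.
  move: ((-1) ^+ p) hs hsz => s hs hsz.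
  case: j => [|j] /=.
  + rewrite expr1 (qintF_rec 1) (qintF_rec 0) qintF0.
    move: (t ^+ p.+2) hx hsz => x hx hsz.
    apply: (@step_even' _ p b _ _ _ ((- x)%:P * 'X^(p.+2)) _ _ _ _ _ _
              (2 * ((1 + x * 0)^-1 - 1) * s) (- (s * (1 + x))) hb0 hsz).
    * by rewrite oppr_eq0 oner_neq0.
    * exact: C2_neq0'.
    * by rewrite polyCN polyC1 mulN1r.
    * apply: shape3; by [].
    * exact: shape6.
    * by [].
    * exact: shape7.
    * apply: shape9; case: hs => ->; field; by rewrite ?oner_neq0.
    * apply: shape10; case: hs => ->; field; by rewrite ?oner_neq0.
    * by [].
  + have hJ0 := hq _ (ltn0Sn j).
    have hJ1 := hq _ (ltn0Sn j.+1).
    have hJ2 := hq _ (ltn0Sn j.+2).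
    move: (t ^+ p.+2) hx hsz hJ0 hJ1 hJ2 => x hx hsz hJ0 hJ1 hJ2.
    rewrite (exprS x j.+1) (xpowF j.+1 x).
    move: hJ1 hJ2; rewrite (qintF_rec j.+2 x) (qintF_rec j.+1 x).
    move: (qintF j.+1 x) hJ0 => J hJ0 hJ1 hJ2.
    apply: (@step_even' _ p b _ _ _
              (- b + (- (((1 + x * J)^-1 - (1 + x * J - J) / J - 2) * s))%:P * 'X^(p.+2))
              _ _ _ _ _ _
              (2 * ((1 + x * J)^-1 - 1) * s) (- (s * (1 + x))) hb0 hsz).
    * have hs0 : s != 0 by case: hs => ->; rewrite ?oppr_eq0 oner_neq0.
      by rewrite mulf_neq0 ?invr_eq0 // !mulf_neq0.
    * exact: C2_neq0.
    * by [].
    * apply: shape3; by [].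
    * exact: shape5.
    * by [].
    * exact: shape7.
    * apply: shape8; case: hs => ->; field; by rewrite ?hJ0 ?hJ1 ?hJ2.
    * apply: shape10; case: hs => ->; field; by rewrite ?hJ0 ?hJ1 ?hJ2.
    * by [].
Qed.

Theorem lemma7p1 (m : nat) (hm : (2 <= m)%N) (n : nat) :
  NextABC (seqA m n) (seqB m n) (seqC m n)
          (seqA m n.+1) (seqB m n.+1) (seqC m n.+1)
          (seqk m n) (seqa m n) (seqD m n).
Proof.
case: m hm => [|[|p]] // _.
rewrite !seqA_eq !seqB_eq !seqC_eq seqa_eq seqD_eq.
have -> : seqk p.+2 n = if odd n then 0%N else p by rewrite /seqk subSS subSS subn0.
apply: main_gen.
- exact: tt_neq0.
- by move=> k hk; rewrite -qint_eq; exact: qint_neq0.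
- exact: beta0.
- exact: beta_size.
Qed.
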